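(* Let $\Gamma$ be a graph that is generically locally rigid in $\mathbb C^d$, let $\rho$ be a generic framework of $\Gamma$ in $\mathbb C^d$, and let $\sigma$ be any framework of $\Gamma$ in $\mathbb C^d$ equivalent to $\rho$. Then $\sigma$ is infinitesimally rigid (in particular, when $\Gamma$ has at least $d+2$ vertices, the points of $\sigma$ affinely span $\mathbb C^d$).
   Context: In $\mathbb C^d$ the squared length is $|w|^2=\sum_i w_i^2$ (no conjugation). A graph $\Gamma$ has $v$ vertices $\mathcal V$ and edges $\mathcal E$; a framework is a map $\mathcal V\to\mathbb C^d$. Frameworks $\rho,\sigma$ are equivalent if $|\rho(t)-\rho(u)|^2=|\sigma(t)-\sigma(u)|^2$ for all edges. The rigidity matrix of $\rho$ has one row per edge $\{t,u\}$, with entries $\rho(t)-\rho(u)$ in the $d$ columns of $t$, $\rho(u)-\rho(t)$ in the $d$ columns of $u$, and zeros elsewhere. $\rho$ is infinitesimally rigid if this matrix has rank $vd-\binom{d+1}{2}$ when $v\ge d+1$, and rank $\binom v2$ when $v\le d+1$. A framework is generic if its coordinates satisfy no nonzero polynomial equation with rational coefficients. $\Gamma$ is generically locally rigid in $\mathbb C^d$ if every generic framework of $\Gamma$ in $\mathbb C^d$ is infinitesimally rigid. *)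

(* Defs.v *)
From HB Require Import structures.
From mathcomp Require Import all_boot all_order all_algebra.
Set Implicit Arguments. Unset Strict Implicit. Unset Printing Implicit Defensive.
Import Order.TTheory GRing.Theory Num.Theory.
Local Open Scope ring_scope.

(* Multivariate polynomials with rational coefficients in n variables,
   Q[x_0,...,x_{n-1}], built as iterated univariate polynomial rings. *)
Fixpoint mpoly (n : nat) : comNzRingType :=
  match n with
  | 0 => rat
  | n'.+1 => {poly mpoly n'}
  end.

(* Evaluation of p in Q[x_0..x_{n-1}] at a point x : 'I_n -> F
   (the outermost variable is x_{n-1}). *)
Fixpoint meval (F : fieldType) (n : nat) : mpoly n -> ('I_n -> F) -> F :=
  match n return mpoly n -> ('I_n -> F) -> F with
  | 0 => fun q _ => ratr q
  | n'.+1 => fun p x =>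
      (map_poly (fun c : mpoly n' => meval c (fun i => x (widen_ord (leqnSn n') i))) p).[x ord_max]
  end.

(* A framework of a graph on v vertices in F^d: row t is the point rho(t). *)
Definition framework (F : fieldType) (v d : nat) := 'M[F]_(v, d).

(* Squared length without conjugation. *)
Definition sqlen (F : fieldType) (d : nat) (w : 'rV[F]_d) : F := \sum_i w 0 i ^+ 2.

Definition generic (F : fieldType) (v d : nat) (rho : framework F v d) : Prop :=
  forall p : mpoly (v * d), p != 0 -> meval p (fun k => mxvec rho 0 k) != 0.

Definition equivalent (F : fieldType) (v d : nat) (e : rel 'I_v)
  (rho sigma : framework F v d) : Prop :=
  forall t u, e t u ->
    sqlen (row t rho - row u rho) = sqlen (row t sigma - row u sigma).

(* Edge set: unordered pairs {t,u}, represented by t < u. *)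
Definition edges (v : nat) (e : rel 'I_v) : {set 'I_v * 'I_v} :=
  [set p | e p.1 p.2 && (p.1 < p.2)%N].

(* The rigidity-matrix row of the edge {t,u}, viewed as a v x d matrix:
   rho(t)-rho(u) in the block of t, rho(u)-rho(t) in the block of u. *)
Definition edge_row (F : fieldType) (v d : nat) (rho : framework F v d)
  (p : 'I_v * 'I_v) : 'M[F]_(v, d) :=
  \matrix_(s, j) (if s == p.1 then rho p.1 j - rho p.2 j
                  else if s == p.2 then rho p.2 j - rho p.1 j else 0).

Definition rigidity_matrix (F : fieldType) (v d : nat) (e : rel 'I_v)
  (rho : framework F v d) : 'M[F]_(#|edges e|, v * d) :=
  \matrix_(k < #|edges e|) mxvec (edge_row rho (enum_val k)).

Definition inf_rigid (F : fieldType) (v d : nat) (e : rel 'I_v)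
  (rho : framework F v d) : Prop :=
  \rank (rigidity_matrix e rho) =
    (if (d.+1 <= v)%N then v * d - 'C(d.+1, 2) else 'C(v, 2))%N.

Definition gen_loc_rigid (F : fieldType) (v d : nat) (e : rel 'I_v) : Prop :=
  forall rho : framework F v d, generic rho -> inf_rigid e rho.

(* Main.v *)
Require Import Defs.
From HB Require Import structures.
From mathcomp Require Import all_boot all_order all_algebra.
From mathcomp Require Import ring.
From Stdlib Require Import Classical ClassicalEpsilon.
Import GRing.Theory.
Set Implicit Arguments. Unset Strict Implicit. Unset Printing Implicit Defensive.
Local Open Scope ring_scope.

Section Ratr.
Variable F : fieldType.
Hypothesis hF : [pchar F] =i pred0.

Lemma intr_eq0F (z : int) : (z%:~R == 0 :> F) = (z == 0).
Proof.
have h := (pcharf0P F).1 hF.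
case: z => n.
  by rewrite /intmul /= h.
by rewrite NegzE rmorphN /= oppr_eq0 /intmul /= h.
Qed.

Lemma ratr_frac (a b : int) : b != 0 ->
  @ratr F (a%:~R / b%:~R) = a%:~R / b%:~R.
Proof.
move=> b0; set q : rat := a%:~R / b%:~R.
have b0' : (b%:~R : rat) != 0 by rewrite intr_eq0.
have hq : numq q * b = a * denq q.
  apply: (@intr_inj rat); rewrite !rmorphM /= numqE /q.
  by rewrite mulrAC divfK.
have bF : (b%:~R : F) != 0 by rewrite intr_eq0F.
have dF : ((denq q)%:~R : F) != 0 by rewrite intr_eq0F denq_neq0.
rewrite /ratr; apply/eqP; rewrite eqr_div //.
by rewrite -!rmorphM /= hq.
Qed.

Lemma ratrD (x y : rat) : @ratr F (x + y) = ratr x + ratr y.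
Proof.
rewrite -[x]divq_num_den -[y]divq_num_den.
set a := numq x; set b := denq x; set c := numq y; set e := denq y.
have b0 : b != 0 by exact: denq_neq0.
have e0 : e != 0 by exact: denq_neq0.
have bF : (b%:~R : F) != 0 by rewrite intr_eq0F.
have eF : (e%:~R : F) != 0 by rewrite intr_eq0F.
have bQ : (b%:~R : rat) != 0 by rewrite intr_eq0.
have eQ : (e%:~R : rat) != 0 by rewrite intr_eq0.
have -> : (a%:~R / b%:~R + c%:~R / e%:~R : rat) = (a * e + c * b)%:~R / (b * e)%:~R.
  rewrite rmorphD !rmorphM /=. field; by apply/andP; split.
rewrite !ratr_frac ?mulf_neq0 //.
rewrite rmorphD !rmorphM /=. field; by apply/andP; split.
Qed.

Lemma ratrM (x y : rat) : @ratr F (x * y) = ratr x * ratr y.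
Proof.
rewrite -[x]divq_num_den -[y]divq_num_den.
set a := numq x; set b := denq x; set c := numq y; set e := denq y.
have b0 : b != 0 by exact: denq_neq0.
have e0 : e != 0 by exact: denq_neq0.
have bF : (b%:~R : F) != 0 by rewrite intr_eq0F.
have eF : (e%:~R : F) != 0 by rewrite intr_eq0F.
have bQ : (b%:~R : rat) != 0 by rewrite intr_eq0.
have eQ : (e%:~R : rat) != 0 by rewrite intr_eq0.
have -> : (a%:~R / b%:~R * (c%:~R / e%:~R) : rat) = (a * c)%:~R / (b * e)%:~R.
  rewrite !rmorphM /=; field; by apply/andP; split.
rewrite !ratr_frac ?mulf_neq0 //.
rewrite !rmorphM /=; field; by apply/andP; split.
Qed.

Lemma ratr_zmod : zmod_morphism (@ratr F).
Proof. move=> x y; by rewrite ratrD /ratr numqN denqN rmorphN mulNr. Qed.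
Lemma ratr_monoid : monoid_morphism (@ratr F).
Proof. split; first by rewrite /ratr /= divr1. exact: ratrM. Qed.
Definition ratrF of [pchar F] =i pred0 : rat -> F := @ratr F.
HB.instance Definition _ := GRing.isZmodMorphism.Build rat F (ratrF hF) ratr_zmod.
HB.instance Definition _ := GRing.isMonoidMorphism.Build rat F (ratrF hF) ratr_monoid.
End Ratr.

Section Meval.
Variable F : fieldType.
Hypothesis hF : [pchar F] =i pred0.

Lemma meval_rmorph (n : nat) (x : 'I_n -> F) :
  {f : {rmorphism mpoly n -> F} | forall p, f p = meval p x}.
Proof.
elim: n x => [|n IH] x.
  by exists (@ratrF F hF).
have [f Hf] := IH (fun i => x (widen_ord (leqnSn n) i)).
exists (horner_eval (x ord_max) \o map_poly f) => p /=.
rewrite horner_evalE; congr (_.[_]); apply: eq_map_poly => c; exact: Hf.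
Qed.

Lemma mevalD n (x : 'I_n -> F) p q : meval (p + q) x = meval p x + meval q x.
Proof. have [f Hf] := meval_rmorph x; by rewrite -!Hf rmorphD. Qed.
Lemma mevalN n (x : 'I_n -> F) p : meval (- p) x = - meval p x.
Proof. have [f Hf] := meval_rmorph x; by rewrite -!Hf rmorphN. Qed.
Lemma mevalB n (x : 'I_n -> F) p q : meval (p - q) x = meval p x - meval q x.
Proof. have [f Hf] := meval_rmorph x; by rewrite -!Hf rmorphB. Qed.
Lemma mevalM n (x : 'I_n -> F) p q : meval (p * q) x = meval p x * meval q x.
Proof. have [f Hf] := meval_rmorph x; by rewrite -!Hf rmorphM. Qed.
Lemma meval1 n (x : 'I_n -> F) : meval 1 x = 1.
Proof. have [f Hf] := meval_rmorph x; by rewrite -!Hf rmorph1. Qed.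
Lemma meval0 n (x : 'I_n -> F) : meval 0 x = 0.
Proof. have [f Hf] := meval_rmorph x; by rewrite -!Hf rmorph0. Qed.
Fixpoint pd (j : nat) (n : nat) : mpoly n -> mpoly n :=
  match n return mpoly n -> mpoly n with
  | 0 => fun _ => 0
  | n'.+1 => fun p => if j == n' then deriv p else map_poly (@pd j n') p
  end.

Fixpoint mvar (n : nat) (k : nat) : mpoly n :=
  match n return mpoly n with
  | 0 => 0
  | n'.+1 => if k == n' then 'X else (@mvar n' k)%:P
  end.

Lemma map_poly_der (R : comNzRingType) (dl : R -> R) :
  (forall a b, dl (a + b) = dl a + dl b) ->
  (forall a b, dl (a * b) = dl a * b + a * dl b) ->
  forall p q : {poly R}, map_poly dl (p * q) = map_poly dl p * q + p * map_poly dl q.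
Proof.
move=> hD hM.
have d0 : dl 0 = 0.
  have h := hD 0 0; rewrite addr0 in h.
  by apply: (@addrI _ (dl 0)); rewrite addr0 -h.
move=> p q; apply/polyP => i; rewrite coefD !coefM coef_map_id0 //.
rewrite coefM (big_morph dl hD d0) -big_split /=; apply: eq_bigr => k _.
by rewrite hM !coef_map_id0 // [p`_k * _]mulrC.
Qed.

Lemma map_poly_add (R : comNzRingType) (dl : R -> R) :
  (forall a b, dl (a + b) = dl a + dl b) ->
  forall p q : {poly R}, map_poly dl (p + q) = map_poly dl p + map_poly dl q.
Proof.
move=> hD.
have d0 : dl 0 = 0.
  have h := hD 0 0; rewrite addr0 in h.
  by apply: (@addrI _ (dl 0)); rewrite addr0 -h.
by move=> p q; apply/polyP => i; rewrite coefD !coef_map_id0 // coefD hD.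
Qed.

Lemma pd_props (j n : nat) :
  (forall p q : mpoly n, pd j (p + q) = pd j p + pd j q) /\
  (forall p q : mpoly n, pd j (p * q) = pd j p * q + p * pd j q).
Proof.
elim: n => [|n [IHD IHM]] /=; first by split => *; rewrite ?addr0 ?mulr0 ?mul0r ?addr0.
case: (j == n); split.
- exact: derivD.
- exact: derivM.
- exact: map_poly_add.
- exact: map_poly_der.
Qed.

Lemma pdD j n (p q : mpoly n) : pd j (p + q) = pd j p + pd j q.
Proof. exact: (pd_props j n).1. Qed.
Lemma pdM j n (p q : mpoly n) : pd j (p * q) = pd j p * q + p * pd j q.
Proof. exact: (pd_props j n).2. Qed.
Lemma pd0 j n : pd j (0 : mpoly n) = 0.
Proof.
have h := pdD j (0 : mpoly n) 0; rewrite addr0 in h.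
by apply: (@addrI _ (pd j (0 : mpoly n))); rewrite addr0 -h.
Qed.
Lemma pd1 j n : pd j (1 : mpoly n) = 0.
Proof.
elim: n => [|n IH] //=; case: (j == n); first exact: derivC.
apply/polyP => i; rewrite coef_map_id0 ?pd0 // coefC coef0.
by case: (i == 0)%N; rewrite ?IH ?pd0.
Qed.

Lemma pd_mvar j n k : (k < n)%N -> pd j (mvar n k) = (k == j)%:R.
Proof.
elim: n => [|n IH] //= kn.
case: (j =P n) => [->|jn].
  by case: (k =P n) => [kE|kn']; [rewrite derivX | rewrite derivC].
case: (k =P n) => [kE|kn'].
  have -> : (k == j) = false by rewrite kE; apply/eqP => h; apply: jn; rewrite h.
  apply/polyP => i; rewrite coef_map_id0 ?pd0 // coefX coefC.
  by case: (i == 1)%N; rewrite ?pd1 ?pd0 //; case: (i == 0)%N.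
have kn2 : (k < n)%N by rewrite ltn_neqAle -ltnS kn andbT; apply/eqP.
apply/polyP => i; rewrite coef_map_id0 ?pd0 // coefC -polyC_natr coefC.
by case: (i == 0)%N; rewrite ?IH ?pd0.
Qed.

Lemma meval_mvar n (x : 'I_n -> F) (k : 'I_n) : meval (mvar n k) x = x k.
Proof.
elim: n x k => [|n IH] x k; first by case: k.
have [f Hf] := meval_rmorph (fun i : 'I_n => x (widen_ord (leqnSn n) i)).
rewrite /=.
rewrite (@eq_map_poly _ _ _ f); last by move=> c; rewrite Hf.
case: (eqVneq (k : nat) n) => [kn|kn].
  rewrite map_polyX hornerX; congr x; apply: val_inj => /=; by rewrite kn.
rewrite map_polyC hornerC.
have kn2 : (k < n)%N by rewrite ltn_neqAle kn -ltnS ltn_ord.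
transitivity (meval (mvar n k) (fun i => x (widen_ord (leqnSn n) i))); first exact: Hf.
rewrite (IH _ (Ordinal kn2)); congr x; exact: val_inj.
Qed.

End Meval.

Section Der.
Variable F : fieldType.
Hypothesis hF : [pchar F] =i pred0.

Record subfield (S : F -> Prop) : Prop := SubField {
  sf0 : S 0; sf1 : S 1;
  sfD : forall a b, S a -> S b -> S (a + b);
  sfN : forall a, S a -> S (- a);
  sfM : forall a b, S a -> S b -> S (a * b);
  sfV : forall a, S a -> S a^-1 }.

Record isDer (S : F -> Prop) (D : F -> F) : Prop := IsDer {
  derD : forall a b, S a -> S b -> D (a + b) = D a + D b;
  derM : forall a b, S a -> S b -> D (a * b) = a * D b + b * D a }.

Variables (S : F -> Prop) (D : F -> F).
Hypotheses (hS : subfield S) (hD : isDer S D).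

Lemma der0 : D 0 = 0.
Proof.
have h := derD hD (sf0 hS) (sf0 hS); rewrite addr0 in h.
by apply: (@addrI _ (D 0)); rewrite addr0 -h.
Qed.

Lemma der1 : D 1 = 0.
Proof.
have h := derM hD (sf1 hS) (sf1 hS); rewrite mulr1 !mul1r in h.
by apply: (@addrI _ (D 1)); rewrite addr0 -h.
Qed.

Lemma sum_in (I : Type) (r : seq I) (P : pred I) (f : I -> F) :
  (forall i, P i -> S (f i)) -> S (\sum_(i <- r | P i) f i).
Proof.
move=> h; elim/big_ind: _ => //; [exact: sf0 hS | exact: sfD hS].
Qed.

Lemma der_sum (I : Type) (r : seq I) (P : pred I) (f : I -> F) :
  (forall i, P i -> S (f i)) ->
  D (\sum_(i <- r | P i) f i) = \sum_(i <- r | P i) D (f i).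
Proof.
move=> h; elim: r => [|x r IH]; first by rewrite !big_nil der0.
rewrite !big_cons; case: ifP => Px //.
by rewrite (derD hD) ?IH //; [exact: h | exact: sum_in].
Qed.

Definition polyIn (p : {poly F}) := forall i, S p`_i.

Lemma polyInD p q : polyIn p -> polyIn q -> polyIn (p + q).
Proof. by move=> hp hq i; rewrite coefD; exact: (sfD hS (hp i) (hq i)). Qed.
Lemma polyInN p : polyIn p -> polyIn (- p).
Proof. by move=> hp i; rewrite coefN; exact: (sfN hS (hp i)). Qed.
Lemma polyInM p q : polyIn p -> polyIn q -> polyIn (p * q).
Proof.
by move=> hp hq i; rewrite coefM; apply: sum_in => j _; exact: (sfM hS (hp _) (hq _)).
Qed.
Lemma polyInC c : S c -> polyIn c%:P.
Proof. by move=> hc i; rewrite coefC; case: ifP => _ //; exact: sf0 hS. Qed.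
Lemma S_mulrn a n : S a -> S (a *+ n).
Proof. move=> ha; elim: n => [|n IH]; [by rewrite mulr0n; exact: sf0 hS | by rewrite mulrS; exact: (sfD hS ha IH)]. Qed.
Lemma S_nat n : S n%:R.
Proof. apply: S_mulrn; exact: sf1 hS. Qed.
Lemma polyInX : polyIn 'X.
Proof. by move=> i; rewrite coefX; apply: S_nat. Qed.
Lemma polyInXn n : polyIn 'X^n.
Proof. by move=> i; rewrite coefXn; apply: S_nat. Qed.
Lemma polyIn_deriv p : polyIn p -> polyIn p^`().
Proof. by move=> hp i; rewrite coef_deriv; apply: S_mulrn; exact: hp. Qed.

Lemma map_derD p q : polyIn p -> polyIn q ->
  map_poly D (p + q) = map_poly D p + map_poly D q.
Proof.
move=> hp hq; apply/polyP => i; rewrite coefD !coef_map_id0 ?der0 //.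
by rewrite coefD (derD hD).
Qed.

Lemma map_derM p q : polyIn p -> polyIn q ->
  map_poly D (p * q) = map_poly D p * q + p * map_poly D q.
Proof.
move=> hp hq; apply/polyP => i; rewrite coefD !coefM coef_map_id0 ?der0 //.
rewrite coefM der_sum; last by move=> j _; exact: (sfM hS (hp _) (hq _)).
rewrite -big_split /=; apply: eq_bigr => j _.
rewrite (derM hD) // !coef_map_id0 ?der0 //; ring.
Qed.

Variable a : F.

Definition Ev (c : F) (p : {poly F}) := (map_poly D p).[a] + p^`().[a] * c.

Lemma EvD c p q : polyIn p -> polyIn q -> Ev c (p + q) = Ev c p + Ev c q.
Proof. by move=> hp hq; rewrite /Ev map_derD // derivD !hornerD; ring. Qed.

Lemma EvM c p q : polyIn p -> polyIn q -> Ev c (p * q) = p.[a] * Ev c q + q.[a] * Ev c p.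
Proof. by move=> hp hq; rewrite /Ev map_derM // derivM !hornerD !hornerM; ring. Qed.

Lemma map_derC s : map_poly D s%:P = (D s)%:P.
Proof.
apply/polyP => i; rewrite coef_map_id0 ?der0 // !coefC; case: ifP => //.
by rewrite der0.
Qed.

Lemma EvC c s : Ev c s%:P = D s.
Proof. by rewrite /Ev map_derC derivC !hornerC mul0r addr0. Qed.

Lemma Ev0 c : Ev c 0 = 0.
Proof. by rewrite /Ev map_poly0 deriv0 !horner0 mul0r addr0. Qed.


Lemma EvN c p : polyIn p -> Ev c (- p) = - Ev c p.
Proof.
move=> hp; apply/eqP; rewrite -subr_eq0 opprK -EvD ?addNr ?Ev0 //.
exact: polyInN.
Qed.

Lemma min_ex (P : nat -> Prop) : (exists n, P n) ->
  exists n, P n /\ forall m, (m < n)%N -> ~ P m.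
Proof.
move=> [n Pn]; apply: NNPP => H.
suff: forall k m, (m <= k)%N -> ~ P m by move/(_ n n (leqnn n)).
elim=> [|k IH] m.
  rewrite leqn0 => /eqP -> P0; apply: H; exists 0%N; split => //.
rewrite leq_eqVlt => /orP [/eqP -> Pk|]; last by rewrite ltnS; apply: IH.
apply: H; exists k.+1; split => // m'; rewrite ltnS; exact: IH.
Qed.

Lemma size_sub_lt (p h : {poly F}) : size h = size p -> lead_coef h = lead_coef p ->
  p != 0 -> (size (p - h)%R < size p)%N.
Proof.
move=> sh lh p0; rewrite -size_poly_gt0 in p0.
move: lh; rewrite !lead_coefE sh => lh.
have -> : size p = (size p).-1.+1 by rewrite prednK.
rewrite ltnS; apply/leq_sizeP => j hj; rewrite coefB.
move: hj; rewrite leq_eqVlt => /orP [/eqP <-|hj]; first by rewrite lh subrr.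
have hp : (size p <= j)%N by rewrite -(prednK p0).
rewrite !nth_default ?subrr //; by rewrite ?sh.
Qed.

Lemma Wc : exists c, forall p, polyIn p -> p.[a] = 0 -> Ev c p = 0.
Proof.
have hF' := (pcharf0P F).1 hF.
case: (classic (exists g, polyIn g /\ g != 0 /\ g.[a] = 0)) => [ex|nex]; last first.
  exists 0 => p hp pa; have -> : p = 0; last exact: Ev0.
  by apply: NNPP => p0; apply: nex; exists p; split => //; split => //; apply/eqP.
have [n [[g [hg [g0 [ga sg]]]] hmin]] :=
  @min_ex (fun n => exists g, polyIn g /\ g != 0 /\ g.[a] = 0 /\ size g = n)
    (let: ex_intro g (conj h1 (conj h2 h3)) := ex in ex_intro _ (size g) (ex_intro _ g (conj h1 (conj h2 (conj h3 erefl))))).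
subst n.
have M : forall h, polyIn h -> (size h < size g)%N -> h.[a] = 0 -> h = 0.
  move=> h hh shg ha; apply: NNPP => h0; apply: (hmin _ shg).
  by exists h; split => //; split => //; apply/eqP.
have sg2 : (1 < size g)%N.
  rewrite ltnNge; apply/negP => sg1.
  have := size1_polyC sg1 => ge; move: ga g0; rewrite ge hornerC => ->.
  by rewrite eqxx.
have g'0 : g^`() != 0.
  apply/eqP => /(congr1 (fun q : {poly F} => q`_(size g).-2)).
  rewrite coef_deriv coef0 -mulr_natr => /eqP; rewrite mulf_eq0 hF' /=.
  have -> : (size g).-2.+1 = (size g).-1 by case: (size g) sg2 => [|[|k]].
  by rewrite -lead_coefE lead_coef_eq0 (negbTE g0) /=; case: (size g) sg2 => [|[|k]].
have g'a : g^`().[a] != 0.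
  apply/eqP => h; move: g'0; rewrite (M g^`() _ _ h) ?eqxx //.
    exact: polyIn_deriv.
  exact: lt_size_deriv.
exists (- (map_poly D g).[a] / g^`().[a]).
set c := (- _ / _).
have Eg : Ev c g = 0 by rewrite /Ev /c; field.
move=> p; have [k] := ubnP (size p); elim: k p => [|k IH] p //.
rewrite ltnS => spk hp pa.
have [p0|p0] := eqVneq p 0; first by rewrite p0 Ev0.
case: (ltnP (size p) (size g)) => [spg|sgp].
  by rewrite (M p hp spg pa) Ev0.
have lg0 : lead_coef g != 0 by rewrite lead_coef_eq0.
have lp0 : lead_coef p != 0 by rewrite lead_coef_eq0.
set h := (lead_coef p / lead_coef g)%:P * 'X^(size p - size g).
have hh : polyIn h.
  apply: polyInM; last exact: polyInXn.
  apply: polyInC; apply: (sfM hS); first exact: hp.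
  by apply: (sfV hS); exact: hg.
have h0 : h != 0.
  by rewrite /h mul_polyC scale_poly_eq0 negb_or mulf_eq0 negb_or invr_eq0 lp0 lg0 /= -size_poly_eq0 size_polyXn.
have sh : size h = (size p - size g).+1.
  by rewrite /h mul_polyC size_scale ?size_polyXn // mulf_eq0 negb_or invr_eq0 lp0 lg0.
have shg : size (h * g) = size p.
  rewrite size_mul // sh addSn /=; by rewrite subnK.
have lhg : lead_coef (h * g) = lead_coef p.
  rewrite lead_coefM /h lead_coefM lead_coefC lead_coefXn mulr1; field; exact: lg0.
have hp1 : polyIn (p - h * g) by apply: polyInD => //; apply: polyInN; apply: polyInM.
have := IH (p - h * g) (leq_trans (size_sub_lt shg lhg p0) spk) hp1.
rewrite hornerD hornerN hornerM ga mulr0 subr0 => /(_ pa).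
rewrite EvD //; last by apply: polyInN; apply: polyInM.
rewrite EvN; last by apply: polyInM.
by rewrite EvM // Eg ga mulr0 mul0r addr0 subr0.
Qed.

Definition adj (z : F) := exists p q, polyIn p /\ polyIn q /\ q.[a] != 0 /\ z = p.[a] / q.[a].

Lemma adj_S z : S z -> adj z.
Proof.
move=> hz; exists z%:P, 1; split; first exact: polyInC.
split; first by apply: polyInC; exact: sf1 hS.
by rewrite !hornerC oner_eq0 divr1.
Qed.

Lemma adj_a : adj a.
Proof.
exists 'X, 1; split; first exact: polyInX.
split; first by apply: polyInC; exact: sf1 hS.
by rewrite hornerX hornerC oner_eq0 divr1.
Qed.

Lemma polyIn1 : polyIn 1.
Proof. by apply: polyInC; exact: sf1 hS. Qed.

Lemma adj_subfield : subfield adj.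
Proof.
split.
- by apply: adj_S; exact: sf0 hS.
- by apply: adj_S; exact: sf1 hS.
- move=> x y [p1 [q1 [h1 [h2 [h3 ->]]]]] [p2 [q2 [h4 [h5 [h6 ->]]]]].
  exists (p1 * q2 + p2 * q1), (q1 * q2); split.
    by apply: polyInD; apply: polyInM.
  split; first by apply: polyInM.
  rewrite !hornerD !hornerM mulf_neq0 //; split => //; field.
  by rewrite h3 h6.
- move=> x [p1 [q1 [h1 [h2 [h3 ->]]]]].
  exists (- p1), q1; split; first exact: polyInN.
  by rewrite hornerN mulNr.
- move=> x y [p1 [q1 [h1 [h2 [h3 ->]]]]] [p2 [q2 [h4 [h5 [h6 ->]]]]].
  exists (p1 * p2), (q1 * q2); split; first by apply: polyInM.
  split; first by apply: polyInM.
  rewrite !hornerM mulf_neq0 //; split => //; field.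
  by rewrite h3 h6.
- move=> x [p1 [q1 [h1 [h2 [h3 ->]]]]].
  have [p0|p0] := eqVneq p1.[a] 0.
    by rewrite p0 mul0r invr0; apply: adj_S; exact: sf0 hS.
  exists q1, p1; do 3!(split => //).
  by rewrite invf_div.
Qed.

Variable c : F.
Hypothesis Wc_c : forall p, polyIn p -> p.[a] = 0 -> Ev c p = 0.

Definition Phi (p q : {poly F}) :=
  (Ev c p * q.[a] - p.[a] * Ev c q) / q.[a] ^+ 2.

Lemma Phi_wd p q p1 q1 : polyIn p -> polyIn q -> polyIn p1 -> polyIn q1 ->
  q.[a] != 0 -> q1.[a] != 0 -> p.[a] / q.[a] = p1.[a] / q1.[a] ->
  Phi p q = Phi p1 q1.
Proof.
move=> hp hq hp1 hq1 qa q1a eq.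
have B : p.[a] * q1.[a] - p1.[a] * q.[a] = 0.
  by apply/eqP; rewrite subr_eq0 -eqr_div // eq.
have A0 : Ev c (p * q1 - p1 * q) = 0.
  apply: Wc_c; first by apply: polyInD; [apply: polyInM|apply: polyInN; apply: polyInM].
  by rewrite hornerD hornerN !hornerM.
have A : p.[a] * Ev c q1 + q1.[a] * Ev c p - (p1.[a] * Ev c q + q.[a] * Ev c p1) = 0.
  rewrite -A0 EvD ?EvN ?EvM //; by [apply: polyInM|apply: polyInN; apply: polyInM].
move: A B; rewrite /Phi.
set P := p.[a]; set Q := q.[a]; set P1 := p1.[a]; set Q1 := q1.[a].
set Ep := Ev c p; set Eq := Ev c q; set Ep1 := Ev c p1; set Eq1 := Ev c q1.
move=> A B.
apply/eqP; rewrite eqr_div ?expf_neq0 //; apply/eqP.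
apply/eqP; rewrite -subr_eq0; apply/eqP.
have -> : (Ep * Q - P * Eq) * Q1 ^+ 2 - (Ep1 * Q1 - P1 * Eq1) * Q ^+ 2 =
  Q * Q1 * (P * Eq1 + Q1 * Ep - (P1 * Eq + Q * Ep1)) - (Q1 * Eq + Q * Eq1) * (P * Q1 - P1 * Q)
  by ring.
by rewrite A B mulr0 mulr0 subr0.
Qed.

Definition Dx (z : F) :=
  let pq := epsilon (inhabits (0 : {poly F}, 0 : {poly F}))
    (fun pq => polyIn pq.1 /\ polyIn pq.2 /\ pq.2.[a] != 0 /\ z = pq.1.[a] / pq.2.[a]) in
  Phi pq.1 pq.2.

Lemma DxE p q : polyIn p -> polyIn q -> q.[a] != 0 -> Dx (p.[a] / q.[a]) = Phi p q.
Proof.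
move=> hp hq qa; rewrite /Dx.
set P := (fun pq : {poly F} * {poly F} => _).
have : P (epsilon (inhabits (0 : {poly F}, 0 : {poly F})) P).
  by apply: epsilon_spec; exists (p, q).
case: (epsilon _ P) => p1 q1 [/= h1 [h2 [h3 h4]]].
by apply: Phi_wd.
Qed.

Lemma Dx_der : isDer adj Dx.
Proof.
split.
- move=> x y [p1 [q1 [h1 [h2 [h3 ->]]]]] [p2 [q2 [h4 [h5 [h6 ->]]]]].
  have -> : p1.[a] / q1.[a] + p2.[a] / q2.[a] = (p1 * q2 + p2 * q1).[a] / (q1 * q2).[a].
    by rewrite !hornerD !hornerM; field; rewrite h3 h6.
  rewrite !DxE //; [|by apply: polyInD; apply: polyInM|by apply: polyInM|by rewrite hornerM mulf_neq0].
  rewrite /Phi !EvD ?EvM //; try by apply: polyInM.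
  rewrite !hornerD !hornerM; field; by rewrite h3 h6.
- move=> x y [p1 [q1 [h1 [h2 [h3 ->]]]]] [p2 [q2 [h4 [h5 [h6 ->]]]]].
  have -> : p1.[a] / q1.[a] * (p2.[a] / q2.[a]) = (p1 * p2).[a] / (q1 * q2).[a].
    by rewrite !hornerM; field; rewrite h3 h6.
  rewrite !DxE //; [|by apply: polyInM|by apply: polyInM|by rewrite hornerM mulf_neq0].
  rewrite /Phi !EvM //.
  rewrite !hornerM; field; by rewrite h3 h6.
Qed.

Lemma Dx_ext z : S z -> Dx z = D z.
Proof.
move=> hz.
have -> : z = (z%:P).[a] / (1 : {poly F}).[a] by rewrite !hornerC divr1.
rewrite DxE //; [|exact: polyInC|exact: polyIn1|by rewrite hornerC oner_eq0].
rewrite /Phi EvC -[1]/(1%:P : {poly F}) EvC der1 !hornerC.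
by rewrite mulr0 subr0 expr1n !mulr1 !divr1.
Qed.

End Der.

Lemma extend (F : fieldType) (hF : [pchar F] =i pred0) (S : F -> Prop) (D : F -> F) (a : F) :
  subfield S -> isDer S D ->
  exists D', isDer (adj S a) D' /\ forall z, S z -> D' z = D z.
Proof.
move=> hS hD; have [c Hc] := Wc hF hS hD a.
exists (Dx S D a c); split; first exact: Dx_der.
exact: Dx_ext.
Qed.

Lemma extend_seq (F : fieldType) (hF : [pchar F] =i pred0) (l : seq F) :
  forall (S : F -> Prop) (D : F -> F), subfield S -> isDer S D ->
  exists T D', subfield T /\ isDer T D' /\ (forall z, S z -> T z /\ D' z = D z)
    /\ (forall z, z \in l -> T z).
Proof.
elim: l => [|a l IH] S D hS hD.
  by exists S, D; do 2!(split => //); split => // z; rewrite in_nil.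
have [D1 [hD1 e1]] := extend hF a hS hD.
have [T [D' [hT [hD' [hST hl]]]]] := IH _ _ (adj_subfield hS a) hD1.
exists T, D'; split => //; split => //; split.
  move=> z hz; have [h1 h2] := hST z (adj_S hS a hz); split => //.
  by rewrite h2 e1.
move=> z; rewrite in_cons => /orP [/eqP ->|]; last exact: hl.
by have [] := hST a (adj_a hS a).
Qed.

Lemma quot_wd (F : fieldType) (P Q P1 Q1 Ep Eq Ep1 Eq1 : F) :
  Q != 0 -> Q1 != 0 -> P * Q1 - P1 * Q = 0 ->
  P * Eq1 + Q1 * Ep - (P1 * Eq + Q * Ep1) = 0 ->
  (Ep * Q - P * Eq) / Q ^+ 2 = (Ep1 * Q1 - P1 * Eq1) / Q1 ^+ 2.
Proof.
move=> q0 q10 B A.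
apply/eqP; rewrite eqr_div ?expf_neq0 //; apply/eqP.
apply/eqP; rewrite -subr_eq0; apply/eqP.
have -> : (Ep * Q - P * Eq) * Q1 ^+ 2 - (Ep1 * Q1 - P1 * Eq1) * Q ^+ 2 =
  Q * Q1 * (P * Eq1 + Q1 * Ep - (P1 * Eq + Q * Ep1)) - (Q1 * Eq + Q * Eq1) * (P * Q1 - P1 * Q)
  by ring.
by rewrite A B mulr0 mulr0 subr0.
Qed.

Section S0.
Variable F : fieldType.
Hypothesis hF : [pchar F] =i pred0.
Variables (n : nat) (x : 'I_n -> F).
Hypothesis gen : forall p : mpoly n, p != 0 -> meval p x != 0.

Lemma gen_inj (p : mpoly n) : meval p x = 0 -> p = 0.
Proof. by move=> h; apply: NNPP => /eqP /gen; rewrite h eqxx. Qed.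

Lemma gen_ev (q : mpoly n) : (meval q x != 0) = (q != 0).
Proof.
apply/idP/idP; last exact: gen.
by apply: contra => /eqP ->; rewrite (meval0 hF).
Qed.

Definition S0 (z : F) := exists p q : mpoly n, q != 0 /\ z = meval p x / meval q x.

Lemma S0_subfield : subfield S0.
Proof.
have m0 := meval0 hF x; have m1 := meval1 hF x.
have mD := mevalD hF x; have mM := mevalM hF x; have mN := mevalN hF x.
have n1 : (1 : mpoly n) != 0 by rewrite -gen_ev m1 oner_eq0.
split.
- by exists 0, 1; rewrite m0 mul0r.
- by exists 1, 1; rewrite m1 divr1.
- move=> a b [p1 [q1 [h1 ->]]] [p2 [q2 [h2 ->]]].
  rewrite -gen_ev in h1; rewrite -gen_ev in h2.
  exists (p1 * q2 + p2 * q1), (q1 * q2); rewrite -gen_ev !mM mD !mM mulf_neq0 //.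
  split => //; field; by rewrite h1 h2.
- move=> a [p1 [q1 [h1 ->]]]; exists (- p1), q1; by rewrite mN mulNr.
- move=> a b [p1 [q1 [h1 ->]]] [p2 [q2 [h2 ->]]].
  rewrite -gen_ev in h1; rewrite -gen_ev in h2.
  exists (p1 * p2), (q1 * q2); rewrite -gen_ev !mM mulf_neq0 //.
  split => //; field; by rewrite h1 h2.
- move=> a [p1 [q1 [h1 ->]]].
  have [p0|p0] := eqVneq (meval p1 x) 0.
    by exists 0, 1; rewrite p0 mul0r invr0 m0 mul0r.
  exists q1, p1; rewrite -gen_ev; split => //; by rewrite invf_div.
Qed.

Variable j : nat.

Definition E0 (p : mpoly n) := meval (pd j p) x.
Definition Phi0 (p q : mpoly n) :=
  (E0 p * meval q x - meval p x * E0 q) / meval q x ^+ 2.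

Definition Dj (z : F) :=
  let pq := epsilon (inhabits (0 : mpoly n, 0 : mpoly n))
    (fun pq => pq.2 != 0 /\ z = meval pq.1 x / meval pq.2 x) in
  Phi0 pq.1 pq.2.

Lemma E0D p q : E0 (p + q) = E0 p + E0 q.
Proof. by rewrite /E0 pdD (mevalD hF). Qed.
Lemma E0M p q : E0 (p * q) = meval p x * E0 q + meval q x * E0 p.
Proof. rewrite /E0 pdM (mevalD hF) !(mevalM hF); ring. Qed.
Lemma E0N p : E0 (- p) = - E0 p.
Proof.
apply/eqP; rewrite -subr_eq0 opprK -E0D addNr /E0 pd0 (meval0 hF) //.
Qed.

Lemma Phi0_wd p q p1 q1 : q != 0 -> q1 != 0 ->
  meval p x / meval q x = meval p1 x / meval q1 x -> Phi0 p q = Phi0 p1 q1.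
Proof.
rewrite -!gen_ev => qa q1a eq.
have B : meval p x * meval q1 x - meval p1 x * meval q x = 0.
  by apply/eqP; rewrite subr_eq0 -eqr_div // eq.
have A0 : p * q1 - p1 * q = 0.
  by apply: gen_inj; rewrite (mevalB hF) !(mevalM hF).
have A : meval p x * E0 q1 + meval q1 x * E0 p - (meval p1 x * E0 q + meval q x * E0 p1) = 0.
  by rewrite -!E0M -E0N -E0D A0 /E0 pd0 (meval0 hF).
exact: quot_wd.
Qed.

Lemma DjE p q : q != 0 -> Dj (meval p x / meval q x) = Phi0 p q.
Proof.
move=> qa; rewrite /Dj.
set P := (fun pq : mpoly n * mpoly n => _).
have : P (epsilon (inhabits (0 : mpoly n, 0 : mpoly n)) P).
  by apply: epsilon_spec; exists (p, q).
case: (epsilon _ P) => p1 q1 [/= h1 h2].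
by apply: Phi0_wd.
Qed.

Lemma Dj_der : isDer S0 Dj.
Proof.
have mD := mevalD hF x; have mM := mevalM hF x.
split.
- move=> a b [p1 [q1 [h1 ->]]] [p2 [q2 [h2 ->]]].
  have h1' := h1; have h2' := h2.
  rewrite -gen_ev in h1'; rewrite -gen_ev in h2'.
  have -> : meval p1 x / meval q1 x + meval p2 x / meval q2 x =
    meval (p1 * q2 + p2 * q1) x / meval (q1 * q2) x.
    by rewrite mD !mM; field; rewrite h1' h2'.
  rewrite !DjE //; last by rewrite -gen_ev mM mulf_neq0.
  rewrite /Phi0 !E0D !E0M mD !mM; field; by rewrite h1' h2'.
- move=> a b [p1 [q1 [h1 ->]]] [p2 [q2 [h2 ->]]].
  have h1' := h1; have h2' := h2.
  rewrite -gen_ev in h1'; rewrite -gen_ev in h2'.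
  have -> : meval p1 x / meval q1 x * (meval p2 x / meval q2 x) =
    meval (p1 * p2) x / meval (q1 * q2) x.
    by rewrite !mM; field; rewrite h1' h2'.
  rewrite !DjE //; last by rewrite -gen_ev mM mulf_neq0.
  rewrite /Phi0 !E0M !mM; field; by rewrite h1' h2'.
Qed.

Lemma S0_x (k : 'I_n) : S0 (x k).
Proof.
exists (mvar n k), 1; rewrite (meval1 hF) divr1 (meval_mvar hF); split => //.
by rewrite -gen_ev (meval1 hF) oner_eq0.
Qed.

Lemma Dj_x (k : 'I_n) : Dj (x k) = (k == j :> nat)%:R.
Proof.
have n1 : (1 : mpoly n) != 0 by rewrite -gen_ev (meval1 hF) oner_eq0.
rewrite -[x k](meval_mvar hF) -[meval _ x]divr1 -(meval1 hF x) DjE //.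
rewrite /Phi0 /E0 pd1 pd_mvar // (meval0 hF) (meval1 hF) mulr0 subr0 expr1n !mulr1 divr1.
have [f Hf] := meval_rmorph hF x.
by rewrite -Hf rmorph_nat.
Qed.

End S0.
Section RankMinor.
Variable F : fieldType.

Lemma rank_mxsub_le m n m' n' (f : 'I_m' -> 'I_m) (g : 'I_n' -> 'I_n) (A : 'M[F]_(m, n)) :
  (\rank (mxsub f g A) <= \rank A)%N.
Proof.
rewrite -{1}[A]mul1mx mxsub_mul.
apply: leq_trans (mxrankM_maxr _ _) _.
rewrite -{1}[A]mulmx1 -mulmx_colsub.
exact: mxrankM_maxl.
Qed.

Lemma rank_minor m n (A : 'M[F]_(m, n)) :
  exists g : 'I_(\rank A) -> 'I_m, exists h : 'I_(\rank A) -> 'I_n,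
    \det (mxsub g h A) != 0.
Proof.
set B := rowsub (maxrankfun A) A.
have fB : row_free B := maxrowsub_free A.
set C := B^T.
have eC : \rank C = \rank A by rewrite mxrank_tr; apply/eqP.
set C' := rowsub (maxrankfun C) C.
have fC : row_free C' := maxrowsub_free C.
set K := castmx (eC, erefl (\rank A)) C'.
have fK : row_free K by rewrite row_free_castmx.
have uK : K \in unitmx by rewrite -row_free_unit.
exists (maxrankfun A), (fun k => maxrankfun C (cast_ord (esym eC) k)).
have -> : mxsub (maxrankfun A) (fun k => maxrankfun C (cast_ord (esym eC) k)) A = K^T.
  apply/matrixP => i k; rewrite !mxE castmxE !mxE /=.
  by congr (A (maxrankfun A _) _); apply: val_inj.
by rewrite det_tr -unitfE -unitmxE.
Qed.

End RankMinor.

Section Rigid.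
Variable F : fieldType.
Hypothesis hF : [pchar F] =i pred0.
Variables (v d : nat) (e : rel 'I_v).

Definition xv (y : framework F v d) : 'I_(v * d) -> F := fun k => mxvec y 0 k.

Definition Xv (t : 'I_v) (i : 'I_d) : mpoly (v * d) := mvar (v * d) (mxvec_index t i).

Definition edge_rowP (p : 'I_v * 'I_v) : 'M[mpoly (v * d)]_(v, d) :=
  \matrix_(s, j) (if s == p.1 then Xv p.1 j - Xv p.2 j
                  else if s == p.2 then Xv p.2 j - Xv p.1 j else 0).

Definition RP : 'M[mpoly (v * d)]_(#|edges e|, v * d) :=
  \matrix_(k < #|edges e|) mxvec (edge_rowP (enum_val k)).

Lemma RP_eval (y : framework F v d) r c :
  meval (RP r c) (xv y) = rigidity_matrix e y r c.
Proof.
rewrite !mxE; case/mxvec_indexP: c => s i; rewrite !mxvecE !mxE.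
have mX t j : meval (Xv t j) (xv y) = y t j by rewrite /Xv (meval_mvar hF) /xv mxvecE.
case: ifP => _; first by rewrite (mevalB hF) !mX.
case: ifP => _; first by rewrite (mevalB hF) !mX.
exact: (meval0 hF).
Qed.

Lemma rank_le_generic (sig rh : framework F v d) : generic rh ->
  (\rank (rigidity_matrix e sig) <= \rank (rigidity_matrix e rh))%N.
Proof.
move=> gen.
have [g [h dg]] := rank_minor (rigidity_matrix e sig).
set r := \rank (rigidity_matrix e sig) in g h dg *.
set PM := mxsub g h RP.
have detE (y : framework F v d) : \det (mxsub g h (rigidity_matrix e y)) = meval (\det PM) (xv y).
  have [f Hf] := meval_rmorph hF (xv y).
  rewrite -Hf -det_map_mx; congr (\det _); apply/matrixP => i k.
  by rewrite [LHS]mxE [RHS]mxE Hf -RP_eval /PM [in RHS]mxE.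
rewrite detE in dg.
have PM0 : \det PM != 0 by apply: contraNneq dg => ->; rewrite (meval0 hF).
have := gen _ PM0; rewrite -[meval _ _]/(meval (\det PM) (xv rh)) -detE => drh.
have u : mxsub g h (rigidity_matrix e rh) \in unitmx by rewrite unitmxE unitfE.
have := rank_mxsub_le g h (rigidity_matrix e rh).
by rewrite (mxrank_unit u).
Qed.

Lemma derN (T : F -> Prop) (D : F -> F) : subfield T -> isDer T D ->
  forall b, T b -> D (- b) = - D b.
Proof.
move=> hT hD b hb; have := derD hD hb (sfN hT hb).
rewrite subrr (der0 hT hD) => h; apply/eqP; rewrite -subr_eq0 opprK addrC -h //.
Qed.

Lemma edge_neq (r : 'I_#|edges e|) : (enum_val r).1 != (enum_val r).2 :> 'I_v.
Proof.
have := enum_valP r; rewrite inE => /andP [_ lt].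
by apply/eqP => h; move: lt; rewrite h ltnn.
Qed.

Lemma der_row (T : F -> Prop) (D : F -> F) (y : framework F v d) (r : 'I_#|edges e|) :
  subfield T -> isDer T D -> (forall k, T (xv y k)) ->
  D (sqlen (row (enum_val r).1 y - row (enum_val r).2 y)) =
  2 * \sum_c rigidity_matrix e y r c * D (xv y c).
Proof.
move=> hT hD hy.
have hy' s i : T (y s i) by have := hy (mxvec_index s i); rewrite /xv mxvecE.
set t := (enum_val r).1; set u := (enum_val r).2.
have tu : t != u := edge_neq r.
rewrite /sqlen (der_sum hT hD); last first.
  by move=> i _; rewrite !mxE; apply: (sfM hT); apply: (sfD hT) => //; apply: (sfN hT).
have -> : \sum_c rigidity_matrix e y r c * D (xv y c) =
  \sum_(p : 'I_v * 'I_d) mxvec (edge_row y (enum_val r)) 0 (mxvec_index p.1 p.2) *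
      D (y p.1 p.2).
  rewrite (reindex (fun p : 'I_v * 'I_d => mxvec_index p.1 p.2)) /=; last first.
    have [g h1 h2] := curry_mxvec_bij v d. exists g => [[a b] _|k _]; first exact: (h1 (a, b) isT). by have := h2 k isT; case: (g k).
  by apply: eq_bigr => p _; rewrite !mxE /xv !mxvecE.
rewrite -(pair_big xpredT xpredT (fun s i => mxvec (edge_row y (enum_val r)) 0 (mxvec_index s i) * D (y s i))) /=.
rewrite exchange_big big_distrr /=; apply: eq_bigr => i _.
rewrite (bigD1 t) //= (bigD1 u) //=; last by rewrite eq_sym.
rewrite big1; last first.
  move=> s /andP [su st]; rewrite mxvecE mxE -/t -/u (negbTE st) (negbTE su) mul0r //.
have ut : (u == t) = false by apply/negbTE; rewrite eq_sym.
rewrite !mxvecE !mxE -/t -/u eqxx ut eqxx.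
rewrite addr0 expr2 (derM hD); last 2 first.
- by apply: (sfD hT) => //; apply: (sfN hT).
- by apply: (sfD hT) => //; apply: (sfN hT).
rewrite (derD hD) ?(derN hT hD) //; last by apply: (sfN hT).
ring.
Qed.

Lemma edge_e (r : 'I_#|edges e|) : e (enum_val r).1 (enum_val r).2.
Proof. by have := enum_valP r; rewrite inE => /andP []. Qed.

Lemma rank_ge (rh sig : framework F v d) : generic rh -> equivalent e rh sig ->
  (\rank (rigidity_matrix e rh) <= \rank (rigidity_matrix e sig))%N.
Proof.
move=> gen heq.
have gx : forall p : mpoly (v * d), p != 0 -> meval p (xv rh) != 0 := gen.
have two : (2 : F) != 0 by rewrite ((pcharf0P F).1 hF 2).
have H : forall j : 'I_(v * d), exists w : 'cV[F]_(v * d),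
    forall r, rigidity_matrix e rh r j = (rigidity_matrix e sig *m w) r 0.
  move=> j.
  have hS := S0_subfield hF gx; have hD := Dj_der hF gx j.
  have [T [D' [hT [hD' [hST hl]]]]] :=
    extend_seq hF [seq xv sig k | k <- enum 'I_(v * d)] hS hD.
  exists (\col_k D' (xv sig k)) => r.
  have hsig k : T (xv sig k) by apply: hl; apply/mapP; exists k; rewrite ?mem_enum.
  have hrh k : T (xv rh k) by have [] := hST _ (S0_x hF gx k).
  have e1 := der_row r hT hD' hsig.
  have e2 := der_row r hT hD' hrh.
  rewrite heq in e2; last exact: edge_e.
  rewrite e1 in e2.
  have e3 : \sum_c rigidity_matrix e rh r c * D' (xv rh c) = rigidity_matrix e rh r j.
    rewrite (bigD1 j) //= big1 ?addr0.
      by have [_ ->] := hST _ (S0_x hF gx j); rewrite (Dj_x hF gx) eqxx mulr1.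
    move=> c cj; have [_ ->] := hST _ (S0_x hF gx c).
    have cj2 : (c == j :> nat) = false by apply/negbTE; move: cj; apply: contra => /eqP h; apply/eqP; apply: val_inj.
    by rewrite (Dj_x hF gx) cj2 mulr0.
  rewrite -e3; apply: (mulfI two); rewrite -e2; congr (_ * _); rewrite mxE; apply: eq_bigr => c _; by rewrite !mxE.
have [f Hf] := fin_all_exists H.
have -> : rigidity_matrix e rh = rigidity_matrix e sig *m (\matrix_(k, j) f j k 0).
  apply/matrixP => r j; rewrite Hf !mxE; apply: eq_bigr => c _; by rewrite !mxE.
exact: mxrankM_maxl.
Qed.

End Rigid.

Unset Implicit Arguments.
Unset Strict Implicit.

Theorem mainTheorem12 (F : closedFieldType) (hF : [pchar F] =i pred0)
  (v d : nat) (e : rel 'I_v) (e_sym : symmetric e) (e_irr : irreflexive e)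
  (hGLR : gen_loc_rigid F d e)
  (rho sigma : framework F v d)
  (hrho : generic rho) (heq : equivalent e rho sigma) :
  inf_rigid e sigma.
Proof.
have := hGLR rho hrho; rewrite /inf_rigid => <-.
apply/eqP; rewrite eqn_leq.
by rewrite (rank_le_generic hF e sigma hrho) (rank_ge hF hrho heq).
Qed.
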